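(* Let $k\ge1$. The class $\mathrm{Alg}(\mathbb{L}_k^{\le})$ of $\mathbb{L}_k^{\le}$-algebras coincides with the class (variety) of $\mathcal{C}_k$-algebras.
   Context: A modal pseudocomplemented De Morgan algebra ($mpM$-algebra) is an algebra $\langle A,\wedge,\vee,\sim,{}^\ast,0,1\rangle$ such that $\langle A,\wedge,\vee,\sim,0,1\rangle$ is a De Morgan algebra (bounded distributive lattice with $\sim\sim x=x$, $\sim(x\vee y)=\sim x\wedge\sim y$), $x^\ast$ is the pseudocomplement of $x$, and $x\vee\sim x\le x\vee x^\ast$. A $\mathcal{C}_k$-algebra ($k\ge1$) is a pair $(A,t)$ with $A$ an $mpM$-algebra and $t$ an $mpM$-automorphism of $A$ with $t^k=\mathrm{id}$. $Fm$ is the set of formulas built from a denumerable set of variables with connectives $\wedge,\vee$ (binary), $\sim,{}^\ast,t$ (unary), $\top,\bot$ (constants); a valuation into a $\mathcal{C}_k$-algebra $(A,t)$ is a homomorphism $v:Fm\to(A,t)$ (with $v(\top)=1$, $v(\bot)=0$). The degree-preserving logic $\mathbb{L}_k^{\le}=\langle Fm,\models_k^{\le}\rangle$: for nonempty finite $\{\alpha_1,\dots,\alpha_n\}$, $\alpha_1,\dots,\alpha_n\models_k^{\le}\alpha$ iff for every $\mathcal{C}_k$-algebra $(A,t)$, every valuation $v$ and every $a\in A$, if $v(\alpha_i)\ge a$ for all $i$ then $v(\alpha)\ge a$; $\emptyset\models_k^{\le}\alpha$ iff $v(\alpha)=1$ for all $(A,t)$ and $v$; for infinite $\Gamma$, $\Gamma\models_k^{\le}\alpha$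 iff some finite nonempty subset of $\Gamma$ entails $\alpha$. For a logic $L$ over $Fm$: a generalized matrix $\langle\mathbf{A},\mathcal{C}\rangle$ ($\mathcal{C}$ a closure system on $A$) is a generalized model of $L$ if every member of $\mathcal{C}$ is closed under $L$ for all valuations; its Tarski congruence is $\bigcap_{F\in\mathcal{C}}\boldsymbol{\Omega}_{\mathbf A}F$, where $\boldsymbol{\Omega}_{\mathbf A}F$ (Leibniz congruence) is the largest congruence of $\mathbf A$ compatible with $F$ ($(a,b)\in\theta$ and $a\in F$ imply $b\in F$). $\mathrm{Alg}(L)$ is the class of algebras $\mathbf A$ having a generalized model $\langle\mathbf A,\mathcal C\rangle$ of $L$ whose Tarski congruence is the identity. *)

(* Defs.v *)
From Stdlib Require Import List.
Import ListNotations.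

Record sig_alg := SigAlg {
  carrier :> Type;
  meet : carrier -> carrier -> carrier;
  join : carrier -> carrier -> carrier;
  dneg : carrier -> carrier;
  pstar : carrier -> carrier;
  top_op : carrier -> carrier;
  one : carrier;
  zero : carrier
}.

Arguments meet {s}. Arguments join {s}. Arguments dneg {s}.
Arguments pstar {s}. Arguments top_op {s}. Arguments one {s}. Arguments zero {s}.

Definition alg_le {A : sig_alg} (x y : A) : Prop := meet x y = x.

Definition is_DeMorgan (A : sig_alg) : Prop :=
  (forall x y z : A, meet x (meet y z) = meet (meet x y) z) /\
  (forall x y z : A, join x (join y z) = join (join x y) z) /\
  (forall x y : A, meet x y = meet y x) /\
  (forall x y : A, join x y = join y x) /\
  (forall x y : A, meet x (join x y) = x) /\
  (forall x y : A, join x (meet x y) = x) /\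
  (forall x y z : A, meet x (join y z) = join (meet x y) (meet x z)) /\
  (forall x : A, join x zero = x) /\
  (forall x : A, meet x one = x) /\
  (forall x : A, dneg (dneg x) = x) /\
  (forall x y : A, dneg (join x y) = meet (dneg x) (dneg y)).

Definition is_pseudocomplement (A : sig_alg) : Prop :=
  forall x y : A, meet x y = zero <-> alg_le y (pstar x).

Definition is_mpM (A : sig_alg) : Prop :=
  is_DeMorgan A /\ is_pseudocomplement A /\
  (forall x : A, alg_le (join x (dneg x)) (join x (pstar x))).

Fixpoint iter_fun {X : Type} (n : nat) (f : X -> X) (x : X) : X :=
  match n with O => x | S m => f (iter_fun m f x) end.

Definition is_Ck (k : nat) (A : sig_alg) : Prop :=
  is_mpM A /\
  (forall x y : A, top_op x = top_op y -> x = y) /\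
  (forall y : A, exists x : A, top_op x = y) /\
  (forall x y : A, top_op (meet x y) = meet (top_op x) (top_op y)) /\
  (forall x y : A, top_op (join x y) = join (top_op x) (top_op y)) /\
  (forall x : A, top_op (dneg x) = dneg (top_op x)) /\
  (forall x : A, top_op (pstar x) = pstar (top_op x)) /\
  top_op (@one A) = one /\
  top_op (@zero A) = zero /\
  (forall x : A, iter_fun k top_op x = x).

Inductive Fm : Type :=
| FVar : nat -> Fm
| FAnd : Fm -> Fm -> Fm
| FOr : Fm -> Fm -> Fm
| FNeg : Fm -> Fm
| FStar : Fm -> Fm
| FT : Fm -> Fm
| FTop : Fm
| FBot : Fm.

Fixpoint eval {A : sig_alg} (h : nat -> A) (f : Fm) : A :=
  match f with
  | FVar n => h n
  | FAnd a b => meet (eval h a) (eval h b)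
  | FOr a b => join (eval h a) (eval h b)
  | FNeg a => dneg (eval h a)
  | FStar a => pstar (eval h a)
  | FT a => top_op (eval h a)
  | FTop => one
  | FBot => zero
  end.

Definition taut_k (k : nat) (a : Fm) : Prop :=
  forall (A : sig_alg), is_Ck k A -> forall h : nat -> A, eval h a = one.

Definition deg_entails_k (k : nat) (l : list Fm) (a : Fm) : Prop :=
  forall (A : sig_alg), is_Ck k A -> forall (h : nat -> A) (c : A),
    (forall b, In b l -> alg_le c (eval h b)) -> alg_le c (eval h a).

Definition conseq_k (k : nat) (G : Fm -> Prop) (a : Fm) : Prop :=
  ((forall b, ~ G b) /\ taut_k k a) \/
  (exists l : list Fm, l <> [] /\ (forall b, In b l -> G b) /\ deg_entails_k k l a).

Definition closure_system {A : sig_alg} (C : (A -> Prop) -> Prop) : Prop :=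
  forall S : (A -> Prop) -> Prop, (forall F, S F -> C F) ->
    C (fun x => forall F, S F -> F x).

Definition is_filter_k (k : nat) {A : sig_alg} (F : A -> Prop) : Prop :=
  forall (G : Fm -> Prop) (a : Fm), conseq_k k G a ->
    forall h : nat -> A, (forall b, G b -> F (eval h b)) -> F (eval h a).

Definition generalized_model_k (k : nat) {A : sig_alg} (C : (A -> Prop) -> Prop) : Prop :=
  closure_system C /\ forall F, C F -> is_filter_k k F.

Definition is_congruence {A : sig_alg} (th : A -> A -> Prop) : Prop :=
  (forall x, th x x) /\ (forall x y, th x y -> th y x) /\
  (forall x y z, th x y -> th y z -> th x z) /\
  (forall x x' y y', th x x' -> th y y' -> th (meet x y) (meet x' y')) /\
  (forall x x' y y', th x x' -> th y y' -> th (join x y) (join x' y')) /\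
  (forall x x', th x x' -> th (dneg x) (dneg x')) /\
  (forall x x', th x x' -> th (pstar x) (pstar x')) /\
  (forall x x', th x x' -> th (top_op x) (top_op x')).

Definition compatible {A : sig_alg} (th : A -> A -> Prop) (F : A -> Prop) : Prop :=
  forall x y, th x y -> F x -> F y.

Definition leibniz {A : sig_alg} (F : A -> Prop) (a b : A) : Prop :=
  exists th : A -> A -> Prop,
    is_congruence th /\ compatible th F /\
    (forall th', is_congruence th' -> compatible th' F -> forall x y, th' x y -> th x y) /\
    th a b.

Definition tarski {A : sig_alg} (C : (A -> Prop) -> Prop) (a b : A) : Prop :=
  forall F, C F -> leibniz F a b.

Definition in_Alg_k (k : nat) (A : sig_alg) : Prop :=
  exists C : (A -> Prop) -> Prop,
    generalized_model_k k C /\ (forall a b, tarski C a b -> a = b).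

(* Main.v *)
Require Import Defs.
From Stdlib Require Import List Arith PeanoNat Lia.
Import ListNotations.

Fixpoint subst (s : nat -> Fm) (f : Fm) : Fm :=
  match f with
  | FVar n => s n
  | FAnd a b => FAnd (subst s a) (subst s b)
  | FOr a b => FOr (subst s a) (subst s b)
  | FNeg a => FNeg (subst s a)
  | FStar a => FStar (subst s a)
  | FT a => FT (subst s a)
  | FTop => FTop
  | FBot => FBot
  end.

Lemma eval_ext (A : sig_alg) (h g : nat -> A) f :
  (forall n, h n = g n) -> eval h f = eval g f.
Proof. intros H; induction f; simpl; congruence. Qed.

Lemma eval_subst (A : sig_alg) (h : nat -> A) s f :
  eval h (subst s f) = eval (fun n => eval h (s n)) f.
Proof. induction f; simpl; congruence. Qed.

Definition upd {A : Type} (h : nat -> A) (x : A) : nat -> A :=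
  fun n => match n with 0 => x | S m => h m end.

Definition Omega {A : sig_alg} (F : A -> Prop) (a b : A) : Prop :=
  forall f (h : nat -> A), F (eval (upd h a) f) <-> F (eval (upd h b) f).

Lemma omega_ctx (A : sig_alg) (F : A -> Prop) x x' c (y : A) (u : A -> A) :
  (forall (h : nat -> A) z, eval (upd (upd h y) z) c = u z) ->
  Omega F x x' -> Omega F (u x) (u x').
Proof.
  intros Hc Hx f h.
  set (s := fun n => match n with 0 => c | S m => FVar (S (S m)) end).
  specialize (Hx (subst s f) (upd h y)). rewrite !eval_subst in Hx.
  rewrite (eval_ext _ (fun n => eval (upd (upd h y) x) (s n)) (upd h (u x)) f) in Hx.
  2:{ intros [|m]; simpl; [apply Hc | reflexivity]. }
  rewrite (eval_ext _ (fun n => eval (upd (upd h y) x') (s n)) (upd h (u x')) f) in Hx.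
  2:{ intros [|m]; simpl; [apply Hc | reflexivity]. }
  exact Hx.
Qed.

Lemma omega_trans (A : sig_alg) (F : A -> Prop) a b c :
  Omega F a b -> Omega F b c -> Omega F a c.
Proof. intros H1 H2 f h. rewrite (H1 f h). apply H2. Qed.

Lemma omega_cong (A : sig_alg) (F : A -> Prop) : is_congruence (Omega F).
Proof.
  split; [intros x f h; tauto|].
  split; [intros x y H f h; rewrite (H f h); tauto|].
  split; [exact (omega_trans A F)|].
  split.
  { intros x x' y y' Hx Hy. apply omega_trans with (meet x' y).
    - apply (omega_ctx A F x x' (FAnd (FVar 0) (FVar 1)) y (fun z => meet z y)); auto.
    - apply (omega_ctx A F y y' (FAnd (FVar 1) (FVar 0)) x' (fun z => meet x' z)); auto. }
  split.
  { intros x x' y y' Hx Hy. apply omega_trans with (join x' y).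
    - apply (omega_ctx A F x x' (FOr (FVar 0) (FVar 1)) y (fun z => join z y)); auto.
    - apply (omega_ctx A F y y' (FOr (FVar 1) (FVar 0)) x' (fun z => join x' z)); auto. }
  split.
  { intros x x' H. apply (omega_ctx A F x x' (FNeg (FVar 0)) x (fun z => dneg z)); auto. }
  split.
  { intros x x' H. apply (omega_ctx A F x x' (FStar (FVar 0)) x (fun z => pstar z)); auto. }
  { intros x x' H. apply (omega_ctx A F x x' (FT (FVar 0)) x (fun z => top_op z)); auto. }
Qed.

Lemma cong_eval (A : sig_alg) (th : A -> A -> Prop) a b h f :
  is_congruence th -> th a b -> th (eval (upd h a) f) (eval (upd h b) f).
Proof.
  intros (Hr & Hs & Ht & Hm & Hj & Hn & Hp & Htt) Hab.
  induction f; simpl; auto. destruct n; simpl; auto.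
Qed.

Lemma leibniz_omega (A : sig_alg) (F : A -> Prop) a b :
  leibniz F a b <-> Omega F a b.
Proof.
  split.
  - intros (th & Hc & Hcomp & _ & Hab) f h.
    pose proof (cong_eval A th a b h f Hc Hab) as H1.
    destruct Hc as (Hr & Hs & _).
    split; intro Hf; eapply Hcomp; eauto.
  - intros H. exists (Omega F). split; [apply omega_cong|].
    split.
    { intros x y Hxy Fx. apply (Hxy (FVar 0) (fun _ => x)). exact Fx. }
    split; [|exact H].
    intros th' Hc Hcomp x y Hxy f h.
    pose proof (cong_eval A th' x y h f Hc Hxy) as H1.
    destruct Hc as (Hr & Hs & _).
    split; intro Hf; eapply Hcomp; eauto.
Qed.

Definition gval {A : Type} (h h' : nat -> A) (n : nat) : A :=
  if Nat.odd n then h' (Nat.div2 n) else h (Nat.div2 n).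

Definition sig_of (a : Fm) (n : nat) : Fm :=
  match n with 0 => subst (fun m => FVar (2 * m)) a | S m => FVar (2 * m + 1) end.

Lemma gval_eval (A : sig_alg) (h h' : nat -> A) a f :
  eval (gval h h') (subst (sig_of a) f) = eval (upd h' (eval h a)) f.
Proof.
  rewrite eval_subst. apply eval_ext. intros [|m].
  - change (eval (gval h h') (subst (fun m => FVar (2 * m)) a) = eval h a).
    rewrite eval_subst. apply eval_ext. intro n.
    change (gval h h' (2 * n) = h n). unfold gval.
    rewrite Nat.odd_even, Nat.div2_even. reflexivity.
  - change (gval h h' (2 * m + 1) = h' m).
    unfold gval. rewrite Nat.odd_odd, Nat.div2_odd'. reflexivity.
Qed.

Definition valid_eq (k : nat) (a b : Fm) : Prop :=
  forall B : sig_alg, is_Ck k B -> forall v : nat -> B, eval v a = eval v b.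

Lemma one_dir (k : nat) (A : sig_alg) (F : A -> Prop) a b g f :
  is_filter_k k F -> valid_eq k a b ->
  F (eval g (subst (sig_of a) f)) -> F (eval g (subst (sig_of b) f)).
Proof.
  intros HF Hv Ha.
  apply (HF (fun x => x = subst (sig_of a) f)).
  - right. exists [subst (sig_of a) f]. split; [discriminate|].
    split; [intros x [Hx|[]]; auto|].
    intros B HB v c Hc.
    assert (E : eval v (subst (sig_of b) f) = eval v (subst (sig_of a) f)).
    { rewrite !eval_subst. apply eval_ext. intros [|m]; simpl; auto.
      rewrite !eval_subst. symmetry. apply Hv; auto. }
    rewrite E. apply Hc. left; reflexivity.
  - intros x ->. exact Ha.
Qed.

Lemma valid_sym k a b : valid_eq k a b -> valid_eq k b a.
Proof. intros H B HB v. symmetry. apply H; auto. Qed.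

Lemma transfer (k : nat) (A : sig_alg) : in_Alg_k k A ->
  forall a b, valid_eq k a b -> forall h : nat -> A, eval h a = eval h b.
Proof.
  intros (C & (Hcl & HF) & Hid) a b Hv h. apply Hid. intros F HCF.
  apply leibniz_omega. intros f h'.
  rewrite <- !(gval_eval A h h').
  split; apply (one_dir k); auto. apply valid_sym; auto.
Qed.

Section Lat.
Variable A : sig_alg.
Hypothesis HD : is_DeMorgan A.

Lemma meet_idem (a : A) : meet a a = a.
Proof.
  destruct HD as (mA & jA & mC & jC & abs1 & abs2 & _).
  transitivity (meet a (join a (meet a a))). rewrite abs2. reflexivity. apply abs1.
Qed.

Lemma le_refl (a : A) : alg_le a a.
Proof. apply meet_idem. Qed.

Lemma le_antisym (a b : A) : alg_le a b -> alg_le b a -> a = b.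
Proof.
  destruct HD as (mA & jA & mC & _). unfold alg_le. intros H1 H2.
  transitivity (meet a b); [symmetry; exact H1|]. rewrite mC. exact H2.
Qed.

Lemma meet_l (x y : A) : alg_le (meet x y) x.
Proof.
  pose proof (meet_idem x).
  destruct HD as (mA & jA & mC & _). unfold alg_le.
  rewrite mC, mA, H. reflexivity.
Qed.

Lemma le_meet_iff (z a b : A) : alg_le z (meet a b) <-> alg_le z a /\ alg_le z b.
Proof.
  pose proof (meet_l a b) as Hl. pose proof (meet_l b a) as Hr.
  destruct HD as (mA & jA & mC & _). unfold alg_le in *. split.
  - intros H. split.
    + rewrite <- H, <- mA, Hl. reflexivity.
    + rewrite <- H, <- mA, (mC a b), Hr. reflexivity.
  - intros [H1 H2]. rewrite mA, H1, H2. reflexivity.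
Qed.

Lemma le_ind (a b : A) : (forall z, alg_le z a <-> alg_le z b) -> a = b.
Proof.
  intros H. apply le_antisym; [apply H | apply H]; apply le_refl.
Qed.

Lemma meet_zero_l (y : A) : meet zero y = zero.
Proof.
  destruct HD as (mA & jA & mC & jC & abs1 & abs2 & dist & j0 & _).
  rewrite <- (j0 y) at 1. rewrite jC. apply abs1.
Qed.
End Lat.

Fixpoint fiter (n : nat) (f : Fm) : Fm :=
  match n with 0 => f | S m => FT (fiter m f) end.

Lemma eval_fiter (A : sig_alg) (h : nat -> A) n f :
  eval h (fiter n f) = iter_fun n top_op (eval h f).
Proof. induction n; simpl; congruence. Qed.

Lemma iter_S {X : Type} (m : nat) (f : X -> X) x :
  iter_fun (S m) f x = iter_fun m f (f x).
Proof. induction m; simpl in *; congruence. Qed.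

Ltac destr_Ck HB :=
  let HD := fresh "HD" in
  destruct HB as [[HD [?Hps ?Hmc]] [?Hinj [?Hsur [?Htm [?Htj [?Htn [?Hts [?Ht1 [?Ht0 ?Hit]]]]]]]]];
  destruct HD as (?mA & ?jA & ?mC & ?jC & ?abs1 & ?abs2 & ?dist & ?j0 & ?m1 & ?dn & ?dm).

Definition v3 {A : Type} (x y z : A) : nat -> A :=
  fun n => match n with 0 => x | 1 => y | _ => z end.

Lemma E2_valid k (B : sig_alg) : is_Ck k B -> forall x y : B,
  meet y (pstar x) = meet y (pstar (meet x y)).
Proof.
  intros HB x y.
  assert (HD : is_DeMorgan B) by (destruct HB as [[HD _] _]; exact HD).
  assert (Hps : is_pseudocomplement B) by (destruct HB as [[_ [Hps _]] _]; exact Hps).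
  apply (le_ind B HD). intro z.
  unfold is_pseudocomplement in Hps.
  rewrite !(le_meet_iff B HD), <- !Hps.
  destruct HD as (mA & jA & mC & _).
  split; intros [H1 H2]; split; auto; unfold alg_le in H1.
  - rewrite <- mA, (mC y z), H1. exact H2.
  - rewrite <- mA, (mC y z), H1 in H2. exact H2.
Qed.

Definition latfilt {A : sig_alg} (F : A -> Prop) : Prop :=
  F one /\ (forall x y, F x -> alg_le x y -> F y) /\ (forall x y, F x -> F y -> F (meet x y)).

Theorem proposition6p9 (k : nat) (hk : 1 <= k) (A : sig_alg) :
  in_Alg_k k A <-> is_Ck k A.
Proof.
  split.
  - intros Halg.
    pose proof (transfer k A Halg) as T.
    assert (HD : is_DeMorgan A).
    { repeat split.
      - intros x y z. exact (T (FAnd (FVar 0) (FAnd (FVar 1) (FVar 2))) (FAnd (FAnd (FVar 0) (FVar 1)) (FVar 2))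
          ltac:(intros B HB v; destr_Ck HB; simpl; auto) (v3 x y z)).
      - intros x y z. exact (T (FOr (FVar 0) (FOr (FVar 1) (FVar 2))) (FOr (FOr (FVar 0) (FVar 1)) (FVar 2))
          ltac:(intros B HB v; destr_Ck HB; simpl; auto) (v3 x y z)).
      - intros x y. exact (T (FAnd (FVar 0) (FVar 1)) (FAnd (FVar 1) (FVar 0))
          ltac:(intros B HB v; destr_Ck HB; simpl; auto) (v3 x y x)).
      - intros x y. exact (T (FOr (FVar 0) (FVar 1)) (FOr (FVar 1) (FVar 0))
          ltac:(intros B HB v; destr_Ck HB; simpl; auto) (v3 x y x)).
      - intros x y. exact (T (FAnd (FVar 0) (FOr (FVar 0) (FVar 1))) (FVar 0)
          ltac:(intros B HB v; destr_Ck HB; simpl; auto) (v3 x y x)).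
      - intros x y. exact (T (FOr (FVar 0) (FAnd (FVar 0) (FVar 1))) (FVar 0)
          ltac:(intros B HB v; destr_Ck HB; simpl; auto) (v3 x y x)).
      - intros x y z. exact (T (FAnd (FVar 0) (FOr (FVar 1) (FVar 2))) (FOr (FAnd (FVar 0) (FVar 1)) (FAnd (FVar 0) (FVar 2)))
          ltac:(intros B HB v; destr_Ck HB; simpl; auto) (v3 x y z)).
      - intros x. exact (T (FOr (FVar 0) FBot) (FVar 0)
          ltac:(intros B HB v; destr_Ck HB; simpl; auto) (v3 x x x)).
      - intros x. exact (T (FAnd (FVar 0) FTop) (FVar 0)
          ltac:(intros B HB v; destr_Ck HB; simpl; auto) (v3 x x x)).
      - intros x. exact (T (FNeg (FNeg (FVar 0))) (FVar 0)
          ltac:(intros B HB v; destr_Ck HB; simpl; auto) (v3 x x x)).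
      - intros x y. exact (T (FNeg (FOr (FVar 0) (FVar 1))) (FAnd (FNeg (FVar 0)) (FNeg (FVar 1)))
          ltac:(intros B HB v; destr_Ck HB; simpl; auto) (v3 x y x)). }
    assert (E1 : forall x : A, meet x (pstar x) = zero).
    { intros x. exact (T (FAnd (FVar 0) (FStar (FVar 0))) FBot
          ltac:(intros B HB v; destr_Ck HB; simpl; apply Hps; apply le_refl; repeat split; auto) (v3 x x x)). }
    assert (E3 : pstar (@zero A) = one).
    { exact (T (FStar FBot) FTop
          ltac:(intros B HB v; destr_Ck HB; simpl;
                assert (Hl : alg_le one (pstar (@zero B))) by (apply (proj1 (Hps _ _)); apply m1);
                unfold alg_le in Hl; rewrite mC in Hl; rewrite m1 in Hl; exact Hl) (v3 one one one)). }
    assert (E2 : forall x y : A, meet y (pstar x) = meet y (pstar (meet x y))).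
    { intros x y. exact (T (FAnd (FVar 1) (FStar (FVar 0))) (FAnd (FVar 1) (FStar (FAnd (FVar 0) (FVar 1))))
          ltac:(intros B HB v; simpl; apply (E2_valid k); auto) (v3 x y x)). }
    assert (Hit : forall x : A, iter_fun k top_op x = x).
    { intros x. pose proof (T (fiter k (FVar 0)) (FVar 0)
          ltac:(intros B HB v; rewrite eval_fiter; destr_Ck HB; apply Hit) (v3 x x x)) as H.
      rewrite eval_fiter in H. exact H. }
    pose proof HD as HD'.
    destruct HD' as (mA & jA & mC & jC & abs1 & abs2 & dist & j0 & m1 & dn & dm).
    split; [split; [exact HD | split] |].
    { intros x y; split.
      - intros H. unfold alg_le. rewrite E2, H, E3. apply m1.
      - intros H. unfold alg_le in H. rewrite <- H.
        rewrite (mC y), mA, E1. apply (meet_zero_l A HD). }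
    { intros x. exact (T (FAnd (FOr (FVar 0) (FNeg (FVar 0))) (FOr (FVar 0) (FStar (FVar 0)))) (FOr (FVar 0) (FNeg (FVar 0)))
          ltac:(intros B HB v; destr_Ck HB; simpl; apply Hmc) (v3 x x x)). }
    split.
    { intros x y H. rewrite <- (Hit x), <- (Hit y). destruct k; [lia|].
      rewrite !iter_S, H. reflexivity. }
    split.
    { intros y. destruct k; [lia|]. exists (iter_fun k top_op y). exact (Hit y). }
    split.
    { intros x y. exact (T (FT (FAnd (FVar 0) (FVar 1))) (FAnd (FT (FVar 0)) (FT (FVar 1)))
          ltac:(intros B HB v; destr_Ck HB; simpl; auto) (v3 x y x)). }
    split.
    { intros x y. exact (T (FT (FOr (FVar 0) (FVar 1))) (FOr (FT (FVar 0)) (FT (FVar 1)))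
          ltac:(intros B HB v; destr_Ck HB; simpl; auto) (v3 x y x)). }
    split.
    { intros x. exact (T (FT (FNeg (FVar 0))) (FNeg (FT (FVar 0)))
          ltac:(intros B HB v; destr_Ck HB; simpl; auto) (v3 x x x)). }
    split.
    { intros x. exact (T (FT (FStar (FVar 0))) (FStar (FT (FVar 0)))
          ltac:(intros B HB v; destr_Ck HB; simpl; auto) (v3 x x x)). }
    split.
    { exact (T (FT FTop) FTop
          ltac:(intros B HB v; destr_Ck HB; simpl; auto) (v3 one one one)). }
    split.
    { exact (T (FT FBot) FBot
          ltac:(intros B HB v; destr_Ck HB; simpl; auto) (v3 one one one)). }
    exact Hit.
  - intros HA.
    assert (HD : is_DeMorgan A) by (destruct HA as [[HD _] _]; exact HD).
    pose proof HD as HD'.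
    destruct HD' as (mA & jA & mC & jC & abs1 & abs2 & dist & j0 & m1 & dn & dm).
    assert (Htr : forall x y z : A, alg_le x y -> alg_le y z -> alg_le x z).
    { unfold alg_le. intros x y z H1 H2. rewrite <- H1, <- mA, H2. reflexivity. }
    exists (@latfilt A). unfold latfilt.
 split; [split|].
    + intros S HS. split; [|split].
      * intros F HF. destruct (HS F HF) as (P1 & P2 & P3). exact P1.
      * intros x y Hx Hxy F HF. destruct (HS F HF) as (P1 & P2 & P3). apply P2 with x; [apply (Hx F HF) | exact Hxy].
      * intros x y Hx Hy F HF. destruct (HS F HF) as (P1 & P2 & P3). apply P3; [apply (Hx F HF) | apply (Hy F HF)].
    + intros F (F1 & Fup & Fmt) G a Hc h HG.
      destruct Hc as [[_ Ht] | (l & _ & Hl & Hd)].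
      * rewrite (Ht A HA h). exact F1.
      * set (c := fold_right (fun b acc => meet (eval h b) acc) one l).
        assert (Fc : F c).
        { subst c. clear Hd. induction l as [|b l IH]; simpl; auto.
          apply Fmt; [apply HG, Hl; left; auto | apply IH; intros; apply Hl; right; auto]. }
        apply Fup with c; auto. apply Hd; auto.
        intros b Hb. subst c. clear Hd Hl Fc. induction l as [|b' l IH]; [destruct Hb|].
        simpl. destruct Hb as [<-|Hb].
        -- apply (meet_l A HD).
        -- apply Htr with (fold_right (fun b acc => meet (eval h b) acc) one l); auto.
           rewrite mC. apply (meet_l A HD).
    + intros a b Hab.
      assert (Hup : forall a0 : A, latfilt (fun x => alg_le a0 x)).
      { intros a0. split; [|split].
        - apply m1.
        - intros x y Hx Hy. eauto.
        - intros x y Hx Hy. apply (le_meet_iff A HD); auto. }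
      pose proof (proj1 (leibniz_omega A _ a b) (Hab _ (Hup a)) (FVar 0) (fun _ => a)) as H1.
      pose proof (proj1 (leibniz_omega A _ a b) (Hab _ (Hup b)) (FVar 0) (fun _ => a)) as H2.
      simpl in H1, H2.
      apply (le_antisym A HD).
      * apply H1. apply le_refl; auto.
      * apply H2. apply le_refl; auto.
Qed.
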